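(* Let $(\mathbf{x}_t,y_t)_{t\ge0}$ be i.i.d. copies of $(\mathbf{x},y)\in\mathbb{R}^d\times\{\pm1\}$ with, almost surely, $\|\mathbf{x}\|\le1$ and $y\mathbf{x}^\top\mathbf{w}_*\ge\gamma$ for some $\gamma>0$ and unit vector $\mathbf{w}_*$. Let $L_t(\mathbf{w}):=\ln(1+\exp(-y_t\mathbf{x}_t^\top\mathbf{w}))$ and run $\mathbf{w}_{t+1}=\mathbf{w}_t-\eta\nabla L_t(\mathbf{w}_t)$ with $\eta>0$ and any $\mathbf{w}_0$. For any $\mathbf{u}_1$, with $\mathbf{u}_2=\frac{\eta}{2\gamma}\mathbf{w}_*$ and $\mathbf{u}=\mathbf{u}_1+\mathbf{u}_2$, almost surely for every $t\ge1$, \[\frac{\|\mathbf{w}_t-\mathbf{u}\|^2}{2\eta t}+\frac1t\sum_{k=0}^{t-1}L_k(\mathbf{w}_k)\le\frac1t\sum_{k=0}^{t-1}L_k(\mathbf{u}_1)+\frac{\|\mathbf{w}_0-\mathbf{u}\|^2}{2\eta t}.\] *)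

(* Defs.v *)
From HB Require Import structures.
From mathcomp Require Import all_boot all_order all_algebra.
From mathcomp Require Import all_classical all_reals all_analysis.
Set Implicit Arguments. Unset Strict Implicit. Unset Printing Implicit Defensive.
Import Order.TTheory GRing.Theory Num.Theory.
Import numFieldNormedType.Exports.
Local Open Scope classical_set_scope.
Local Open Scope ring_scope.

Definition dotv {R : comNzRingType} {d : nat} (u v : 'rV[R]_d) : R := (u *m v^T) 0 0.
Definition enorm {R : rcfType} {d : nat} (v : 'rV[R]_d) : R := Num.sqrt (dotv v v).

Definition logloss {R : realType} {d : nat} (x : 'rV[R]_d) (y : R) (w : 'rV[R]_d) : R :=
  ln (1 + expR (- (y * dotv x w))).

Definition grad {R : realType} {d : nat} (f : 'rV[R]_d -> R) (w : 'rV[R]_d) : 'rV[R]_d :=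
  \row_i ('D_(delta_mx 0 i) f w).

Fixpoint gd_iter {R : realType} {d : nat} (eta : R) (w0 : 'rV[R]_d)
  (L : nat -> 'rV[R]_d -> R) (t : nat) : 'rV[R]_d :=
  match t with
  | 0 => w0
  | t'.+1 => gd_iter eta w0 L t' - eta *: grad (L t') (gd_iter eta w0 L t')
  end.

Definition sample_event {T : Type} {R : realType} {d : nat}
  (X : nat -> T -> 'rV[R]_d) (Y : nat -> T -> R) (i : nat)
  (A : set R) (B : 'I_d -> set R) : set T :=
  [set w | A (Y i w) /\ forall j, B j (X i w 0 j)].

(* The samples (X t, Y t) are random variables (all coordinates measurable),
   mutually independent (product rule on measurable rectangles, a pi-system
   generating the Borel sigma-algebra of R^{d+1}), and identically distributed. *)
Definition iid_samples {dT : measure_display} {T : measurableType dT} {R : realType}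
  {d : nat} (P : probability T R) (X : nat -> T -> 'rV[R]_d) (Y : nat -> T -> R) : Prop :=
  [/\ (forall t, measurable_fun setT (Y t) /\
                 forall j, measurable_fun setT (fun w => X t w 0 j)),
      (forall (s : seq nat) (A : nat -> set R) (B : nat -> 'I_d -> set R),
          uniq s -> (forall i, measurable (A i)) -> (forall i j, measurable (B i j)) ->
          P (\bigcap_(i in [set` s]) sample_event X Y i (A i) (B i))
          = (\prod_(i <- s) P (sample_event X Y i (A i) (B i)))%E) &
      (forall t (A : set R) (B : 'I_d -> set R),
          measurable A -> (forall j, measurable (B j)) ->
          P (sample_event X Y t A B) = P (sample_event X Y 0 A B))].

(* Main.v *)
Require Import Defs.
From HB Require Import structures.
From mathcomp Require Import all_boot all_order all_algebra.
From mathcomp Require Import all_classical all_reals all_analysis.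
From mathcomp Require Import ring lra.
Import Order.TTheory GRing.Theory Num.Theory.
Import numFieldNormedType.Exports.
Local Open Scope classical_set_scope.
Local Open Scope ring_scope.

Section dot.
Variables (R : comNzRingType) (d : nat).
Implicit Types u v w : 'rV[R]_d.
Lemma dotvE u v : dotv u v = \sum_i u 0 i * v 0 i.
Proof. by rewrite /dotv !mxE; apply: eq_bigr => i _; rewrite mxE. Qed.
Lemma dotvC u v : dotv u v = dotv v u.
Proof. by rewrite !dotvE; apply: eq_bigr => i _; rewrite mulrC. Qed.
Lemma dotvDr u v w : dotv u (v + w) = dotv u v + dotv u w.
Proof. by rewrite !dotvE -big_split; apply: eq_bigr => i _; rewrite mxE mulrDr. Qed.
Lemma dotvDl u v w : dotv (v + w) u = dotv v u + dotv w u.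
Proof. by rewrite dotvC dotvDr !(dotvC u). Qed.
Lemma dotvZr a u v : dotv u (a *: v) = a * dotv u v.
Proof. by rewrite !dotvE mulr_sumr; apply: eq_bigr => i _; rewrite mxE mulrCA. Qed.
Lemma dotvZl a u v : dotv (a *: v) u = a * dotv v u.
Proof. by rewrite dotvC dotvZr dotvC. Qed.
Lemma dotvNr u v : dotv u (- v) = - dotv u v.
Proof. by rewrite -scaleN1r dotvZr mulN1r. Qed.
Lemma dotvNl u v : dotv (- v) u = - dotv v u.
Proof. by rewrite dotvC dotvNr dotvC. Qed.
End dot.

Lemma dotv_ge0 (R : realDomainType) d (v : 'rV[R]_d) : 0 <= dotv v v.
Proof. by rewrite dotvE; apply: sumr_ge0 => i _; rewrite -expr2 sqr_ge0. Qed.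

Lemma enorm_sqr (R : rcfType) d (v : 'rV[R]_d) : enorm v ^+ 2 = dotv v v.
Proof. by rewrite /enorm sqr_sqrtr // dotv_ge0. Qed.

Lemma dotv_delta (R : comNzRingType) d (x : 'rV[R]_d) (i : 'I_d) :
  dotv x (delta_mx 0 i) = x 0 i.
Proof.
rewrite dotvE (bigD1 i) //= big1 ?addr0 => [|j ji]; rewrite mxE.
  by rewrite !eqxx mulr1.
by rewrite (negbTE ji) andbF mulr0.
Qed.

Lemma g_derive (R : realType) (c b : R) :
  is_derive (0:R) 1 (fun h : R => ln (1 + expR (c + h * b)))
     ((1 + expR c)^-1 * (expR c * b)).
Proof.
have lin : is_derive (0:R) 1 (fun h : R => c + h * b) b.
  have -> : (fun h : R => c + h * b) = cst c + b \*: id.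
     by apply/funext => h; rewrite /= mulrC.
  have := (is_deriveD (@is_derive_cst R R^o R^o c 0 1) (is_deriveZ b (@is_derive_id R R^o 0 1))).
  by move=> H; apply: (is_derive_eq H); rewrite add0r; exact: mulr1.
have ex : is_derive (0:R) 1 (fun h : R => expR (c + h * b)) (expR c * b).
  have := is_derive1_comp (f := expR) (is_derive_expR _) lin.
  by rewrite /= mul0r addr0.
have inn : is_derive (0:R) 1 (fun h : R => 1 + expR (c + h * b)) (expR c * b).
  have -> : (fun h : R => 1 + expR (c + h * b)) = cst 1 + (fun h : R => expR (c + h * b)).
     by apply/funext.
  by move: (is_deriveD (@is_derive_cst R R^o R^o 1 0 1) ex) => H; apply: (is_derive_eq H); rewrite add0r.
have pos : 0 < 1 + expR c :> R by rewrite addr_gt0 ?expR_gt0.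
have := is_derive1_comp (f := @ln R) _ inn.
rewrite /= mul0r addr0 => H; exact: (H _ (is_derive1_ln pos)).
Qed.

Lemma grad_logloss (R : realType) d (x : 'rV[R]_d) (y : R) (w : 'rV[R]_d) :
  grad (logloss x y) w = (- (y / (1 + expR (y * dotv x w)))) *: x.
Proof.
apply/rowP => i; rewrite !mxE.
set c := - (y * dotv x w); set b := - (y * x 0 i).
have -> : 'D_(delta_mx 0 i) (logloss x y) w =
   'D_1 (fun h : R => ln (1 + expR (c + h * b))) 0.
  rewrite /derive; congr (lim (_ @ 0^')); apply/funext => h /=.
  rewrite /logloss /c /b dotvDr dotvZr dotv_delta mul0r !addr0.
  have -> : h%:A = h :> R by rewrite /GRing.scale /= mulr1.
  by congr (_ *: (ln (1 + expR _) - _)); ring.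
have G := g_derive R c b.
rewrite derive_val /b /c !expRN.
have e0 : expR (y * dotv x w) != 0 by rewrite gt_eqF ?expR_gt0.
have e1 : 1 + expR (y * dotv x w) != 0 by rewrite gt_eqF ?addr_gt0 ?expR_gt0.
have e2 : 1 + (expR (y * dotv x w))^-1 != 0.
  by rewrite gt_eqF ?addr_gt0 ?invr_gt0 ?expR_gt0.
move: e0 e1 e2; set E := expR _ => e0 e1 e2.
have H : (1 + E^-1)^-1 * E^-1 = (1 + E)^-1.
  by rewrite -invfM mulrDl mul1r mulVf // addrC.
by rewrite mulrA H mulrN mulNr mulrA [_^-1 * y]mulrC.
Qed.

Lemma exp_conv (R : realType) (s t : R) : 0 <= s -> s <= 1 ->
  expR (s * t) <= 1 - s + s * expR t.
Proof.
move=> s0 s1; set a := expR (s * t).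
have a0 : 0 < a by rewrite expR_gt0.
have h1 : a * (1 - s * t) <= 1.
  have e : 1 = a * expR (- (s * t)) by rewrite -expRD subrr expR0.
  by rewrite [X in _ <= X]e ler_pM2l //; exact: expR_ge1Dx.
have h2 : a * (1 + (1 - s) * t) <= expR t.
  have -> : expR t = a * expR ((1 - s) * t) by rewrite -expRD; congr expR; ring.
  by rewrite ler_pM2l //; exact: expR_ge1Dx.
have s1' : 0 <= 1 - s by rewrite subr_ge0.
nra.
Qed.

Lemma tangent (R : realType) (z z' : R) :
  ln (1 + expR (- z)) - (1 + expR z)^-1 * (z' - z) <= ln (1 + expR (- z')).
Proof.
set s := (1 + expR z)^-1.
have E0 : 0 < expR z by rewrite expR_gt0.
have s0 : 0 < s by rewrite invr_gt0 addr_gt0.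
have s1 : s <= 1 by rewrite invf_le1 ?addr_gt0 // lerDl ltW.
have key : 1 + expR (- z') = (1 + expR (- z)) * (1 - s + s * expR (- (z' - z))).
  rewrite /s !expRN expRD !expRN.
  have F0 : expR z' != 0 by rewrite gt_eqF ?expR_gt0.
  have E1 : expR z != 0 by rewrite gt_eqF.
  have E2 : 1 + expR z != 0 by rewrite gt_eqF ?addr_gt0.
  move: F0 E1 E2; set E := expR z; set F := expR z' => F0 E1 E2.
  by field; rewrite E1 F0 E2.
have p1 : 0 < 1 + expR (- z) by rewrite addr_gt0 ?expR_gt0.
have p2 : 0 < 1 - s + s * expR (- (z' - z)).
  by rewrite ltr_wpDl ?subr_ge0 // mulr_gt0 ?expR_gt0.
rewrite key lnM ?posrE // lerD2l.
have := @exp_conv R s (- (z' - z)) (ltW s0) s1.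
rewrite -ler_ln ?posrE ?expR_gt0 // expRK mulrN => h.
exact: h.
Qed.

Lemma step (R : realType) d (x u1 wst w : 'rV[R]_d) (y gamma eta : R) :
  dotv x x <= 1 -> y * y = 1 -> gamma <= y * dotv x wst -> 0 < gamma -> 0 < eta ->
  dotv (w - eta *: grad (logloss x y) w - (u1 + (eta / (2 * gamma)) *: wst))
       (w - eta *: grad (logloss x y) w - (u1 + (eta / (2 * gamma)) *: wst))
   <= dotv (w - (u1 + (eta / (2 * gamma)) *: wst)) (w - (u1 + (eta / (2 * gamma)) *: wst))
     + 2 * eta * (logloss x y u1 - logloss x y w).
Proof.
move=> N1 yy gC g0 e0.
set u := u1 + _ *: wst; set w' := w - _ *: _.
set s := (1 + expR (y * dotv x w))^-1.
set k := eta / (2 * gamma).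
have s0 : 0 <= s by rewrite invr_ge0 addr_ge0 ?expR_ge0.
have s1 : s <= 1 by rewrite invf_le1 ?addr_gt0 ?expR_gt0 // lerDl expR_ge0.
have ew : w' - u = (w - u) + (eta * (y * s)) *: x.
  rewrite /w' grad_logloss; apply/rowP => i; rewrite !mxE /s; ring.
have dexp : forall (a : 'rV[R]_d) c, dotv (a + c *: x) (a + c *: x)
    = dotv a a + 2 * c * dotv x a + c ^+ 2 * dotv x x.
  move=> a c; rewrite !dotvDl !dotvDr !dotvZl !dotvZr (@dotvC _ _ a x); ring.
have dxa : dotv x (w - u) = dotv x w - dotv x u1 - k * dotv x wst.
  by rewrite /u dotvDr dotvNr dotvDr dotvZr /k opprD addrA.
rewrite ew dexp dxa.
have T := @tangent R (y * dotv x w) (y * dotv x u1).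
rewrite -/s in T.
have F1 : eta * s * (y * dotv x w - y * dotv x u1)
    <= eta * (logloss x y u1 - logloss x y w).
  rewrite -mulrA ler_pM2l // /logloss; lra.
have F2 : eta * s * k * gamma <= eta * s * k * (y * dotv x wst).
  have k0 : 0 <= k by rewrite /k divr_ge0 // ?mulr_ge0 // ltW.
  by apply: ler_wpM2l => //; apply: mulr_ge0 => //; apply: mulr_ge0 => //; exact: ltW.
have kg : k * gamma = eta / 2 by rewrite /k; field; rewrite gt_eqF.
have F3 : (eta * (y * s)) ^+ 2 * dotv x x <= eta ^+ 2 * s.
  have -> : (eta * (y * s)) ^+ 2 = eta ^+ 2 * s * s * (y * y) by ring.
  rewrite yy mulr1.
  have hN := @dotv_ge0 _ _ x.
  have hs : s * dotv x x <= 1 by nra.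
  have -> : eta ^+ 2 * s * s * dotv x x = (eta ^+ 2 * s) * (s * dotv x x) by ring.
  rewrite -[X in _ <= X]mulr1; apply: ler_wpM2l => //.
  by apply: mulr_ge0 => //; rewrite exprn_ge0 // ltW.
have -> : 2 * (eta * (y * s)) * (dotv x w - dotv x u1 - k * dotv x wst)
   = 2 * (eta * s * (y * dotv x w - y * dotv x u1)) - 2 * (eta * s * k * (y * dotv x wst)).
  by ring.
have : eta * s * k * gamma = eta ^+ 2 * s / 2.
  have -> : eta * s * k * gamma = eta * s * (k * gamma) by ring.
  by rewrite kg; ring.
lra.
Qed.

Lemma det (R : realType) d (xs : nat -> 'rV[R]_d) (ys : nat -> R) (gamma eta : R)
  (wst w0 u1 u : 'rV[R]_d) :
  (forall k, dotv (xs k) (xs k) <= 1 /\ ys k * ys k = 1 /\ gamma <= ys k * dotv (xs k) wst) ->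
  0 < gamma -> 0 < eta -> u = u1 + (eta / (2 * gamma)) *: wst ->
  forall t,
  dotv (gd_iter eta w0 (fun k => logloss (xs k) (ys k)) t - u)
       (gd_iter eta w0 (fun k => logloss (xs k) (ys k)) t - u)
  + 2 * eta * \sum_(k < t) logloss (xs k) (ys k) (gd_iter eta w0 (fun k => logloss (xs k) (ys k)) k)
  <= dotv (w0 - u) (w0 - u) + 2 * eta * \sum_(k < t) logloss (xs k) (ys k) u1.
Proof.
move=> H g0 e0 hu; elim=> [|t IH].
  by rewrite !big_ord0 mulr0 !addr0.
rewrite !big_ord_recr /=.
have [N1 [yy gC]] := H t.
have S := @step R d (xs t) u1 wst (gd_iter eta w0 (fun k => logloss (xs k) (ys k)) t)
   (ys t) gamma eta N1 yy gC g0 e0.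
rewrite -hu in S.
lra.
Qed.

Theorem mainTheorem16 (R : realType) (dT : measure_display) (T : measurableType dT)
  (P : probability T R) (d : nat)
  (X : nat -> T -> 'rV[R]_d) (Y : nat -> T -> R)
  (gamma : R) (wstar : 'rV[R]_d) (eta : R) (w0 u1 : 'rV[R]_d) :
  iid_samples P X Y ->
  0 < gamma -> enorm wstar = 1 ->
  (forall t, {ae P, forall w, enorm (X t w) <= 1 /\ (Y t w = 1 \/ Y t w = -1) /\
                              gamma <= Y t w * dotv (X t w) wstar}) ->
  0 < eta ->
  let u := u1 + (eta / (2 * gamma)) *: wstar in
  {ae P, forall w, forall t : nat, (0 < t)%N ->
     let L := fun k => logloss (X k w) (Y k w) in
     let wt := gd_iter eta w0 L in
     enorm (wt t - u) ^+ 2 / (2 * eta * t%:R)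
       + (t%:R)^-1 * \sum_(k < t) L k (wt k)
     <= (t%:R)^-1 * \sum_(k < t) L k u1 + enorm (w0 - u) ^+ 2 / (2 * eta * t%:R)}.

Proof.
move=> _ g0 _ H e0 u.
have := ae_foralln H.
apply: filterS => w Hw t t0 /=.
set L := fun k => logloss (X k w) (Y k w).
set wt := gd_iter eta w0 L.
have hk : forall k, dotv (X k w) (X k w) <= 1 /\ Y k w * Y k w = 1 /\
    gamma <= Y k w * dotv (X k w) wstar.
  move=> k; have [n1 [y1 g1]] := Hw k; split; last split => //.
    rewrite -enorm_sqr; apply: exprn_ile1 => //.
    by rewrite /enorm sqrtr_ge0.
  by case: y1 => ->; rewrite ?mulrNN mulr1.
have D := @det R d (X ^~ w) (Y ^~ w) gamma eta wstar w0 u1 u hk g0 e0 erefl t.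
rewrite !enorm_sqr.
have tp : 0 < t%:R :> R by rewrite ltr0n.
have p : 0 < 2 * eta * t%:R by rewrite !mulr_gt0.
have eL : dotv (wt t - u) (wt t - u) / (2 * eta * t%:R) + t%:R^-1 * \sum_(k < t) L k (wt k)
   = (dotv (wt t - u) (wt t - u) + 2 * eta * \sum_(k < t) L k (wt k)) / (2 * eta * t%:R).
  by field; rewrite !gt_eqF.
have eR : t%:R^-1 * \sum_(k < t) L k u1 + dotv (w0 - u) (w0 - u) / (2 * eta * t%:R)
   = (dotv (w0 - u) (w0 - u) + 2 * eta * \sum_(k < t) L k u1) / (2 * eta * t%:R).
  by field; rewrite !gt_eqF.
rewrite eL eR ler_pM2r ?invr_gt0 //.
Qed.
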